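(* For every nonnegative integer $n$ and complex parameters $\alpha,a$, \begin{align*} {}_3\phi_2\biggl({{q^{-n}, \alpha q^{n+1},q}\atop{q^2/a, 0}}; q, q\biggr) =q^{n^2+2n} \frac{(q, \alpha a; q)_n}{\bigl(q\alpha, q^2/a; q\bigr)_n} \Bigl(\frac{\alpha}{a}\Bigr)^n \sum_{j=0}^n \frac{\bigl(1-\alpha q^{2j}\bigr) (\alpha, q/a; q)_j (a/\alpha)^j q^{-j^2-j}}{(1-\alpha)(q, \alpha a; q)_j}. \end{align*}
   Context: Throughout, $q$ is a complex number with $0<|q|<1$. For $x\in\mathbb{C}$ and an integer $n\ge 0$, $(x;q)_n=\prod_{k=0}^{n-1}(1-xq^k)$, and $(x_1,\dots,x_m;q)_n=(x_1;q)_n\cdots(x_m;q)_n$. The basic hypergeometric series is ${}_r\phi_s\Bigl({{a_1,\dots,a_r}\atop{b_1,\dots,b_s}};q,z\Bigr)=\sum_{n=0}^\infty \frac{(a_1,\dots,a_r;q)_n}{(q,b_1,\dots,b_s;q)_n}\bigl((-1)^nq^{n(n-1)/2}\bigr)^{1+s-r}z^n$ (here a lower parameter $0$ means $(0;q)_n=1$). *)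

(* Defs.v *)
From Stdlib Require Import Reals ZArith List.
From Coquelicot Require Import Coquelicot.
Open Scope C_scope.

Fixpoint qpoch (x q : C) (n : nat) : C :=
  match n with
  | O => 1
  | S m => qpoch x q m * (1 - x * q ^ m)
  end.

Definition qpochs (xs : list C) (q : C) (n : nat) : C :=
  fold_right (fun x acc => qpoch x q n * acc) 1 xs.

Definition Czpow (x : C) (k : Z) : C :=
  match k with
  | Z0 => 1
  | Zpos p => x ^ Pos.to_nat p
  | Zneg p => / (x ^ Pos.to_nat p)
  end.

Definition phi_term (as_ bs : list C) (q z : C) (n : nat) : C :=
  qpochs as_ q n / qpochs (q :: bs) q n
  * Czpow ((- 1) ^ n * q ^ (n * (n - 1) / 2))
          (1 + Z.of_nat (length bs) - Z.of_nat (length as_))%Z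
  * z ^ n.

Definition is_phi (as_ bs : list C) (q z v : C) : Prop :=
  is_series (V := C_NormedModule) (phi_term as_ bs q z) v.

(* Main.v *)
Require Import Defs.
From Stdlib Require Import Reals ZArith List Lia Lra.
From Coquelicot Require Import Coquelicot.
Import ListNotations.
Open Scope C_scope.

Lemma Cmult_integral (x y : C) : x * y = 0 -> x = 0 \/ y = 0.
Proof.
  intros H. destruct (Ceq_dec x 0) as [Hx|Hx]; [left; auto|right].
  replace y with (/ x * (x * y)) by (field; auto). rewrite H. ring.
Qed.

Lemma qpoch_S x q k : qpoch x q (S k) = qpoch x q k * (1 - x * q ^ k).
Proof. reflexivity. Qed.

Lemma qpoch_shift x y q k : y = x * q -> qpoch x q (S k) = (1 - x) * qpoch y q k.
Proof.
  intros ->. induction k.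
  - simpl. ring.
  - rewrite qpoch_S, IHk. rewrite (qpoch_S (x*q)). rewrite Cpow_S. ring.
Qed.

Lemma qpoch_0 q k : qpoch 0 q k = 1.
Proof. induction k; simpl; [reflexivity|rewrite IHk; ring]. Qed.

Lemma qpoch_prefix x q j k : (j <= k)%nat -> qpoch x q k <> 0 -> qpoch x q j <> 0.
Proof.
  induction 1; auto. intros H0. apply IHle. intro E; apply H0.
  rewrite qpoch_S, E. ring.
Qed.

Lemma qpoch_factor x q m k : (m < k)%nat -> qpoch x q k <> 0 -> 1 - x * q ^ m <> 0.
Proof.
  intros Hl H E. apply (qpoch_prefix x q (S m) k Hl) in H.
  apply H. rewrite qpoch_S, E. ring.
Qed.

Lemma qpoch_vanish (q : C) n k : q <> 0 -> (n < k)%nat -> qpoch (/ q ^ n) q k = 0.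
Proof.
  intros hq H. induction H.
  - rewrite qpoch_S. replace (1 - / q ^ n * q ^ n) with (RtoC 0).
    + ring.
    + field; apply Cpow_nz; auto.
  - rewrite qpoch_S, IHle. ring.
Qed.

Lemma pow_ne1 (q : C) m : (Cmod q < 1)%R -> (0 < m)%nat -> q ^ m <> 1.
Proof.
  intros hq hm E. assert (H := Cmod_pow q m). rewrite E, Cmod_1 in H.
  assert (0 <= Cmod q)%R by apply Cmod_ge_0.
  assert (Cmod q ^ m < 1)%R by (apply pow_lt_1_compat; [lra|lia]).
  lra.
Qed.

Lemma qpoch_q_nz (q : C) k : (Cmod q < 1)%R -> qpoch q q k <> 0.
Proof.
  intros hq. induction k; simpl.
  - intro E. injection E. lra.
  - intro E. apply Cmult_integral in E. destruct E as [E|E]; [auto|].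
    apply (pow_ne1 q (S k) hq); [lia|]. rewrite Cpow_S.
    replace (q * q ^ k) with (1 - (1 - q * q ^ k)) by ring. rewrite E. ring.
Qed.

Lemma sum_Sn' (f : nat -> C) n : sum_n f (S n) = sum_n f n + f (S n).
Proof. rewrite sum_Sn. reflexivity. Qed.
Lemma sum_O' (f : nat -> C) : sum_n f 0 = f 0%nat.
Proof. rewrite sum_O. reflexivity. Qed.

Ltac toC := match goal with |- @eq _ ?l ?r => change (@eq C l r) end.

Lemma sum_ext_le (f g : nat -> C) n : (forall k, (k <= n)%nat -> f k = g k) -> sum_n f n = sum_n g n.
Proof.
  induction n; intros H.
  - rewrite !sum_O'. apply H; lia.
  - rewrite !sum_Sn', IHn, H; auto.
Qed.

Lemma sum_lin (f g : nat -> C) c n : sum_n (fun k => f k - c * g k) n = sum_n f n - c * sum_n g n.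
Proof. induction n; [rewrite !sum_O'; toC; ring| rewrite !sum_Sn', IHn; toC; ring]. Qed.

Lemma sum_tele (G : nat -> C) n : sum_n (fun k => G (S k) - G k) n = G (S (S n)) - G 0%nat - (G (S (S n)) - G (S n)).
Proof. induction n; [rewrite !sum_O'; toC; ring| rewrite !sum_Sn', IHn; toC; ring]. Qed.

Lemma sum_stable (f : nat -> C) n k : (forall j, (n < j)%nat -> f j = 0) -> (n <= k)%nat -> sum_n f k = sum_n f n.
Proof.
  intros Hf. induction 1; auto. rewrite sum_Sn', IHle, Hf; [toC; ring|lia].
Qed.

Section Main.
Variables (q al a : C).
Hypotheses (hq0 : q <> 0) (hq1 : (Cmod q < 1)%R) (ha : a <> 0) (hal0 : al <> 0) (hal1 : al <> 1).

Definition Cc n := q ^ (n * n + 2 * n) * (qpochs [q; al * a] q n / qpochs [q * al; q ^ 2 / a] q n) * (al / a) ^ n.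
Definition tt j := (1 - al * q ^ (2 * j)) * qpochs [al; q / a] q j * (a / al) ^ j * / (q ^ (j * j + j))
         / ((1 - al) * qpochs [q; al * a] q j).
Definition Kf m := let x := q ^ S m in
  q * x ^ 2 * (1 - x) * (1 - al * a * x / q) * al / ((1 - al * x) * (1 - q * x / a) * a).
Definition c1 m := let x := q ^ S m in - x * (1 - al * x ^ 2) / ((a - q * x) * (1 - al * x)).

Lemma nz1 : 1 - al <> 0.
Proof. intro E. apply hal1. replace al with (1 - (1 - al)) by ring. rewrite E. ring. Qed.

Lemma G1 m : 1 - q * al * q ^ m <> 0 -> 1 - al * (q * q ^ m) <> 0.
Proof. intros F E. apply F. rewrite <- E. ring. Qed.
Lemma G2 m : 1 - q ^ 2 / a * q ^ m <> 0 -> a - q * (q * q ^ m) <> 0.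
Proof. intros F E. apply F. replace (1 - q ^ 2 / a * q ^ m) with ((a - q * (q * q ^ m)) / a) by (field; auto).
  rewrite E. field; auto. Qed.

Lemma Cc_step m : qpoch (q * al) q (S m) <> 0 -> qpoch (q ^ 2 / a) q (S m) <> 0 ->
  qpoch (al * a) q (S m) <> 0 -> Cc (S m) = Kf m * Cc m.
Proof.
  intros H1 H2 H3.
  assert (F1 := qpoch_factor _ _ m _ (Nat.lt_succ_diag_r m) H1).
  assert (F2 := qpoch_factor _ _ m _ (Nat.lt_succ_diag_r m) H2).
  assert (P1 := qpoch_prefix _ _ m _ (Nat.le_succ_diag_r m) H1).
  assert (P2 := qpoch_prefix _ _ m _ (Nat.le_succ_diag_r m) H2).
  assert (Hp : q ^ (S m * S m + 2 * S m) = q ^ (m * m + 2 * m) * q ^ m * q ^ m * q * q * q).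
  { replace (S m * S m + 2 * S m)%nat with ((m*m+2*m) + m + m + 1 + 1 + 1)%nat by lia.
    rewrite !Cpow_add_r, Cpow_1_r. reflexivity. }
  unfold Cc, Kf, qpochs. cbn [fold_right]. rewrite Hp. rewrite !qpoch_S. rewrite !Cpow_S.
  assert (q ^ (m * m + 2 * m) <> 0) by (apply Cpow_nz; auto).
  assert (q ^ m <> 0) by (apply Cpow_nz; auto).
  field. repeat split; auto using G1, G2.
Qed.

Lemma Ctt_step m : qpoch (q * al) q (S m) <> 0 -> qpoch (q ^ 2 / a) q (S m) <> 0 ->
  qpoch (al * a) q (S m) <> 0 -> Cc (S m) * tt (S m) = - c1 m * (a - q).
Proof.
  intros H1 H2 H3.
  assert (F1 := qpoch_factor _ _ m _ (Nat.lt_succ_diag_r m) H1).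
  assert (F2 := qpoch_factor _ _ m _ (Nat.lt_succ_diag_r m) H2).
  assert (P1 := qpoch_prefix _ _ m _ (Nat.le_succ_diag_r m) H1).
  assert (P2 := qpoch_prefix _ _ m _ (Nat.le_succ_diag_r m) H2).
  assert (PQ := qpoch_q_nz q (S m) hq1).
  assert (Hp : q ^ (S m * S m + 2 * S m) = q ^ (S m * S m + S m) * q ^ S m).
  { replace (S m * S m + 2 * S m)%nat with ((S m * S m + S m) + S m)%nat by lia.
    rewrite !Cpow_add_r. reflexivity. }
  assert (Hp2 : q ^ (2 * S m) = q ^ S m * q ^ S m).
  { replace (2 * S m)%nat with (S m + S m)%nat by lia. apply Cpow_add_r. }
  assert (Ha : qpoch al q (S m) = (1 - al) * qpoch (q * al) q m) by (apply qpoch_shift; ring).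
  assert (Hb : qpoch (q / a) q (S m) = (1 - q / a) * qpoch (q ^ 2 / a) q m) by (apply qpoch_shift; field; auto).
  assert (Hi : a / al = / (al / a)) by (field; auto).
  assert (q ^ (S m * S m + S m) <> 0) by (apply Cpow_nz; auto).
  assert ((al / a) ^ S m <> 0) by (apply Cpow_nz; intro E; apply hal0;
     replace al with (al / a * a) by (field; auto); rewrite E; ring).
  assert (q ^ m <> 0) by (apply Cpow_nz; auto).
  unfold Cc, tt, c1, qpochs. cbn [fold_right]. rewrite Hp, Hp2, Ha, Hb, Hi, Cpow_inv by
    (intro E; apply hal0; replace al with (al / a * a) by (field; auto); rewrite E; ring).
  rewrite (qpoch_S (q * al)), (qpoch_S (q ^ 2 / a)).
  rewrite (Cpow_S q m).
  field. repeat split; auto using G1, G2, nz1.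
Qed.

Definition T n k := qpoch (/ q ^ n) q k * qpoch (al * q ^ (n + 1)) q k * q ^ k / qpoch (q ^ 2 / a) q k.
Definition Ef k := match k with O => a - q | S j => a / qpoch (q ^ 2 / a) q j end.
Definition Gf m k := c1 m * qpoch (/ q ^ S m) q k * qpoch (al * q ^ S m) q k * Ef k.

Lemma Ef_eq k : qpoch (q ^ 2 / a) q k <> 0 -> Ef k = (a - q * q ^ k) / qpoch (q ^ 2 / a) q k.
Proof.
  destruct k as [|j]; intros H; cbn [Ef].
  - cbn [qpoch Cpow]. field.
  - rewrite qpoch_S in *. rewrite (Cpow_S q j).
    assert (qpoch (q ^ 2 / a) q j <> 0) by (intro E; apply H; rewrite E; ring).
    assert (H1 : 1 - q ^ 2 / a * q ^ j <> 0) by (intro E; apply H; rewrite E; ring).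
    assert (a - q ^ 2 * q ^ j <> 0).
    { intro E. apply H1. replace (1 - q ^ 2 / a * q ^ j) with ((a - q ^ 2 * q ^ j) / a) by (field; auto).
      rewrite E. field. auto. }
    field. repeat split; auto.
Qed.

Lemma T_step m k : (k <= S m)%nat -> qpoch (q * al) q (S m) <> 0 -> qpoch (q ^ 2 / a) q (S m) <> 0 ->
  T (S m) k - Kf m * T m k = Gf m (S k) - Gf m k.
Proof.
  intros Hk H1 H2.
  assert (F1 := G1 _ (qpoch_factor _ _ m _ (Nat.lt_succ_diag_r m) H1)).
  assert (F2 := G2 _ (qpoch_factor _ _ m _ (Nat.lt_succ_diag_r m) H2)).
  assert (HB := qpoch_prefix _ _ k _ Hk H2).
  assert (Hx1 : q ^ S m <> 1) by (apply pow_ne1; auto; lia).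
  assert (Hx0 : q ^ S m <> 0) by (apply Cpow_nz; auto).
  assert (Hxs : q ^ S m = q * q ^ m) by apply Cpow_S.
  rewrite <- Hxs in F1, F2.
  assert (E1 : qpoch (al * q ^ (S m + 1)) q k = qpoch (al * q ^ S m) q k * (1 - al * q ^ S m * q ^ k) / (1 - al * q ^ S m)).
  { rewrite <- qpoch_S. rewrite (qpoch_shift (al * q ^ S m) (al * q ^ (S m + 1))).
    - field. auto.
    - rewrite Nat.add_1_r, (Cpow_S q (S m)). ring. }
  assert (q ^ m <> 0) by (apply Cpow_nz; auto).
  assert (Hxm1 : q ^ S m - 1 <> 0).
  { intro E. apply Hx1. replace (q ^ S m) with (q ^ S m - 1 + 1) by ring. rewrite E. ring. }
  assert (Hx1' : 1 - / q ^ S m <> 0).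
  { intro E. apply Hx1. assert (Hi : / q ^ S m = 1) by (replace (/ q ^ S m) with (1 - (1 - / q ^ S m)) by ring; rewrite E; ring).
    replace (q ^ S m) with (/ / q ^ S m) by (field; auto). rewrite Hi. field. }
  assert (E2 : qpoch (/ q ^ m) q k = qpoch (/ q ^ S m) q k * (1 - / q ^ S m * q ^ k) / (1 - / q ^ S m)).
  { rewrite <- qpoch_S. rewrite (qpoch_shift (/ q ^ S m) (/ q ^ m)).
    - field. repeat split; cbv beta; auto.
    - rewrite Hxs. field. auto. }
  unfold T, Gf. rewrite E1, E2, Nat.add_1_r.
  rewrite (Ef_eq k HB). cbn [Ef]. rewrite !qpoch_S.
  unfold Kf, c1. cbv zeta.
  set (x := q ^ S m) in *. set (y := q ^ k).
  assert (1 - q * x / a <> 0).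
  { intro E. apply F2. replace (a - q * x) with (a * (1 - q * x / a)) by (field; auto). rewrite E. ring. }
  field. repeat split; auto.
Qed.

Lemma Gf_vanish m j : (S m < j)%nat -> Gf m j = 0.
Proof. intros Hj. unfold Gf. rewrite (qpoch_vanish q (S m) j hq0 Hj). toC. ring. Qed.

Lemma main n : qpoch (q * al) q n <> 0 -> qpoch (q ^ 2 / a) q n <> 0 -> qpoch (al * a) q n <> 0 ->
  sum_n (T n) n = Cc n * sum_n tt n.
Proof.
  induction n as [|m IH]; intros H1 H2 H3.
  - rewrite !sum_O'. unfold T, Cc, tt, qpochs. cbn [fold_right qpoch Cpow Nat.mul Nat.add].
    toC. field. all: cbv beta; try apply nz1.
  - assert (H1' := qpoch_prefix _ _ m _ (Nat.le_succ_diag_r m) H1).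
    assert (H2' := qpoch_prefix _ _ m _ (Nat.le_succ_diag_r m) H2).
    assert (H3' := qpoch_prefix _ _ m _ (Nat.le_succ_diag_r m) H3).
    specialize (IH H1' H2' H3').
    assert (Hsum : sum_n (fun k => T (S m) k - Kf m * T m k) (S m) = sum_n (fun k => Gf m (S k) - Gf m k) (S m)).
    { apply sum_ext_le. intros k Hk. apply T_step; auto. }
    rewrite sum_lin, sum_tele in Hsum.
    rewrite (Gf_vanish m (S (S (S m)))), (Gf_vanish m (S (S m))) in Hsum by lia.
    assert (HT : T m (S m) = 0).
    { unfold T. rewrite (qpoch_vanish q m (S m) hq0) by lia. toC. unfold Cdiv. ring. }
    rewrite (sum_Sn' (T m)) in Hsum. rewrite HT, IH in Hsum.
    rewrite (sum_Sn' tt).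
    replace (Cc (S m) * (sum_n tt m + tt (S m))) with (Cc (S m) * sum_n tt m + Cc (S m) * tt (S m)) by (toC; ring).
    rewrite Ctt_step, Cc_step; auto.
    unfold Gf in Hsum. cbn [qpoch Ef] in Hsum.
    replace (sum_n (T (S m)) (S m)) with (sum_n (T (S m)) (S m) - Kf m * (Cc m * sum_n tt m + 0) + Kf m * (Cc m * sum_n tt m + 0)) by (toC; ring).
    rewrite Hsum. toC. ring.
Qed.

Lemma series_fin (f : nat -> C) n : (forall k, (n < k)%nat -> f k = 0) ->
  is_series (V := C_NormedModule) f (sum_n f n).
Proof.
  intros Hf. unfold is_series.
  apply (filterlim_ext_loc (fun _ => sum_n f n)).
  - exists n. intros k Hk. symmetry. apply sum_stable; auto.
  - apply filterlim_const.
Qed.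

End Main.

Theorem theorem2p6 (q alpha a : C) (n : nat)
  (hq0 : q <> 0) (hq1 : (Cmod q < 1)%R)
  (ha : a <> 0) (halpha0 : alpha <> 0) (halpha1 : alpha <> 1)
  (h1 : qpoch (q * alpha) q n <> 0)
  (h2 : qpoch (q ^ 2 / a) q n <> 0)
  (h3 : qpoch (alpha * a) q n <> 0) :
  is_phi [/ q ^ n; alpha * q ^ (n + 1); q] [q ^ 2 / a; RtoC 0] q q
    (q ^ (n * n + 2 * n)
     * (qpochs [q; alpha * a] q n / qpochs [q * alpha; q ^ 2 / a] q n)
     * (alpha / a) ^ n
     * sum_n (fun j =>
         (1 - alpha * q ^ (2 * j)) * qpochs [alpha; q / a] q j * (a / alpha) ^ j
           * / (q ^ (j * j + j))
         / ((1 - alpha) * qpochs [q; alpha * a] q j)) n).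
Proof.
  assert (Hm := main q alpha a hq0 hq1 ha halpha0 halpha1 n h1 h2 h3).
  unfold Cc, tt in Hm. rewrite <- Hm.
  assert (Hpt : forall k, phi_term [/ q ^ n; alpha * q ^ (n + 1); q] [q ^ 2 / a; RtoC 0] q q k = T q alpha a n k).
  { intros k. unfold phi_term, qpochs, T. cbn [fold_right length].
    replace (1 + Z.of_nat 2 - Z.of_nat 3)%Z with 0%Z by reflexivity. cbn [Czpow].
    rewrite qpoch_0. assert (PQ := qpoch_q_nz q k hq1).
    destruct (Nat.le_gt_cases k n) as [Hk|Hk].
    - assert (HB := qpoch_prefix _ _ k _ Hk h2). field. auto.
    - rewrite (qpoch_vanish q n k hq0 Hk). unfold Cdiv. ring. }
  unfold is_phi. apply (is_series_ext (T q alpha a n)).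
  { intros k. symmetry. apply Hpt. }
  apply series_fin. intros k Hk. unfold T. rewrite (qpoch_vanish q n k hq0 Hk). unfold Cdiv. ring.
Qed.
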